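(* Let $k$ be a field, $U$ a $d$-dimensional $k$-vector space, and $\phi_3$ a nonzero element of $D_3U^*$. Then there exist a unit $\alpha$ of $k$ and a basis $x_1^*,\dots,x_d^*$ of $U^*$ such that (a) $\alpha\phi_3=x_1^{*(3)}+x_1^*\phi_{2,0}+\phi_{3,0}$, or (b) $\alpha\phi_3=x_1^{*(2)}x_2^*+x_1^*\phi_{2,0}+\phi_{3,0}$, or (c) $k$ has characteristic two and $\phi_3=\sum_{1\le i<j<l\le d}\alpha_{i,j,l}\,x_i^*x_j^*x_l^*$ for some $\alpha_{i,j,l}\in k$, where in (a) and (b) $\phi_{i,0}$ is an element of $D_i\big(\bigoplus_{2\le j\le d}k\,x_j^*\big)$ for $i=2,3$.
   Context: $U^*=\operatorname{Hom}_k(U,k)$ and $D_\bullet U^*=\bigoplus_iD_iU^*$, $D_iU^*=\operatorname{Hom}_k(\operatorname{Sym}_iU,k)$, is the divided power algebra of $U^*$. For $v\in U^*$, $v^{(n)}$ denotes the $n$-th divided power (behaving like $v^n/n!$); for a basis $x_1^*,\dots,x_d^*$ of $U^*$ dual to a basis $x_1,\dots,x_d$ of $U$, $x_1^{*(a_1)}\cdots x_d^{*(a_d)}$ is the functional taking value $1$ on the monomial $x_1^{a_1}\cdots x_d^{a_d}$ and $0$ on the other monomials of the same degree; factors written without parenthesized exponent have exponent one. For a subspace $W\subseteq U^*$, $D_iW$ is the subspace of $D_iU^*$ generated by products of $i$ elements of $W$ (in the divided power sense). *)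

(* Defs.v *)
From HB Require Import structures.
From mathcomp Require Import all_boot all_order all_fingroup all_algebra.
Set Implicit Arguments. Unset Strict Implicit. Unset Printing Implicit Defensive.
Import GRing.Theory.
Local Open Scope ring_scope.

Section DividedPowers.
Variables (k : fieldType) (U : vectType k).

Definition Udual := 'Hom(U, k^o).

(* Elements of D_n U^* = Hom_k(Sym_n U, k) are identified with symmetric
   n-linear forms on U (the universal property of Sym_n U). *)
Definition dform (n : nat) := {ffun 'I_n -> U} -> k.

Definition multilinear n (f : dform n) : Prop :=
  forall (u : {ffun 'I_n -> U}) (i : 'I_n) (a : k) (v w : U),
    f [ffun j => if j == i then a *: v + w else u j]
    = a * f [ffun j => if j == i then v else u j]
      + f [ffun j => if j == i then w else u j].

Definition symmetric n (f : dform n) : Prop :=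
  forall (u : {ffun 'I_n -> U}) (s : 'S_n), f [ffun j => u (s j)] = f u.

Definition inDU n (f : dform n) : Prop := multilinear f /\ symmetric f.

(* divided power v^(n) : value prod_i v(u_i), i.e. 1 on x^n for v = x^* *)
Definition dpow (v : Udual) (n : nat) : dform n :=
  fun u => \prod_(i < n) (v (u i) : k).

Definition shuffle a b (s : 'S_(a + b)) : bool :=
  [forall i : 'I_a, forall j : 'I_a,
      (i < j)%N ==> (s (lshift b i) < s (lshift b j))%N] &&
  [forall i : 'I_b, forall j : 'I_b,
      (i < j)%N ==> (s (rshift a i) < s (rshift a j))%N].

(* multiplication of the divided power algebra D_. U^* (shuffle product) *)
Definition dmul a b (f : dform a) (g : dform b) : dform (a + b) :=
  fun u => \sum_(s : 'S_(a + b) | shuffle s)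
             f [ffun i => u (s (lshift b i))] * g [ffun j => u (s (rshift a j))].

Inductive dpgen (W : {vspace Udual}) : forall n, dform n -> Prop :=
| dpgen0 : @dpgen W 0 (fun _ => 1)
| dpgenS (a n : nat) (w : Udual) (psi : dform n) :
    w \in W -> dpgen W psi -> dpgen W (dmul (@dpow w a.+1) psi).

Definition inDW (W : {vspace Udual}) n (f : dform n) : Prop :=
  exists (m : nat) (c : 'I_m -> k) (g : 'I_m -> dform n),
    (forall i, dpgen W (g i)) /\ forall u, f u = \sum_(i < m) c i * g i u.

End DividedPowers.

Arguments dpow {k U} v n.

(* Main.v *)
Require Import Defs.
From HB Require Import structures.
From mathcomp Require Import all_boot all_order all_fingroup all_algebra.
From mathcomp Require Import zify ring.
From Stdlib Require Import Classical.
Set Implicit Arguments. Unset Strict Implicit. Unset Printing Implicit Defensive.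
Import GRing.Theory.
Local Open Scope ring_scope.

Definition o30 : 'I_3 := @Ordinal 3 0 isT.
Definition o31 : 'I_3 := @Ordinal 3 1 isT.
Definition o32 : 'I_3 := @Ordinal 3 2 isT.
Definition o20 : 'I_2 := @Ordinal 2 0 isT.
Definition o21 : 'I_2 := @Ordinal 2 1 isT.

Lemma ord3P (x : 'I_3) : [\/ x = o30, x = o31 | x = o32].
Proof.
case: x => [[|[|[|m]]] h]; try by [].
- by constructor 1; apply: val_inj.
- by constructor 2; apply: val_inj.
- by constructor 3; apply: val_inj.
Qed.

Lemma ord2P (x : 'I_2) : x = o20 \/ x = o21.
Proof.
case: x => [[|[|m]] h]; try by [].
- by left; apply: val_inj.
- by right; apply: val_inj.
Qed.

Definition mkfun n (s : seq 'I_n) : 'I_n -> 'I_n := fun x => nth x s x.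
Lemma mkfun_inj n (s : seq 'I_n) : uniq s -> size s == n -> injective (mkfun s).
Proof.
move=> us /eqP sz x y; rewrite /mkfun => e.
have hx : (x < size s)%N by rewrite sz.
have hy : (y < size s)%N by rewrite sz.
rewrite (set_nth_default x y hy) in e.
by apply/val_inj/eqP; rewrite -(nth_uniq x hx hy us) e.
Qed.

Definition lo3 (p : 'I_3) : 'I_3 := if val p == 0%N then o31 else o30.
Definition hi3 (p : 'I_3) : 'I_3 := if val p == 2%N then o31 else o32.
Lemma uL p : uniq [:: p; lo3 p; hi3 p].
Proof. by case: (ord3P p) => ->. Qed.
Lemma uR p : uniq [:: lo3 p; hi3 p; p].
Proof. by case: (ord3P p) => ->. Qed.
Definition sigL (p : 'I_3) : 'S_3 := perm (mkfun_inj (uL p) isT).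
Definition sigR (p : 'I_3) : 'S_3 := perm (mkfun_inj (uR p) isT).
Definition o2 (p : 'I_2) : 'I_2 := if val p == 0%N then o21 else o20.
Lemma u2 p : uniq [:: p; o2 p].
Proof. by case: (ord2P p) => ->. Qed.
Definition sig2 (p : 'I_2) : 'S_2 := perm (mkfun_inj (u2 p) isT).

Lemma shuffle12E (s : 'S_3) : @shuffle 1 2 s = (s o31 < s o32)%N.
Proof.
rewrite /shuffle.
have -> : [forall i : 'I_1, forall j : 'I_1, (i < j)%N ==> (s (lshift 2 i) < s (lshift 2 j))%N].
  by apply/forallP => i; apply/forallP => j; rewrite !ord1.
have e0 : rshift 1 o20 = o31 by apply: val_inj.
have e1 : rshift 1 o21 = o32 by apply: val_inj.
rewrite /=; apply/forallP/idP => [h | h i].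
  by have := forallP (h o20) o21; rewrite e0 e1.
apply/forallP => j.
by case: (ord2P i) => ->; case: (ord2P j) => -> //=; rewrite e0 e1.
Qed.

Lemma shuffle21E (s : 'S_3) : @shuffle 2 1 s = (s o30 < s o31)%N.
Proof.
rewrite /shuffle.
have -> : [forall i : 'I_1, forall j : 'I_1, (i < j)%N ==> (s (rshift 2 i) < s (rshift 2 j))%N].
  by apply/forallP => i; apply/forallP => j; rewrite !ord1.
have e0 : lshift 1 o20 = o30 by apply: val_inj.
have e1 : lshift 1 o21 = o31 by apply: val_inj.
rewrite andbT; apply/forallP/idP => [h | h i].
  by have := forallP (h o20) o21; rewrite e0 e1.
apply/forallP => j.
by case: (ord2P i) => ->; case: (ord2P j) => -> //=; rewrite e0 e1.
Qed.

Lemma shuffle11E (s : 'S_(1+1)) : shuffle s.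
Proof.
by apply/andP; split; apply/forallP => i; apply/forallP => j; rewrite !ord1.
Qed.

Lemma shuffle_a0 a (s : 'S_(a+0)) :
  shuffle s = [forall i : 'I_a, forall j : 'I_a, (i < j)%N ==> (s (lshift 0 i) < s (lshift 0 j))%N].
Proof.
rewrite /shuffle; apply: andb_idr => _.
by apply/forallP => i; case: i.
Qed.

Lemma incr_ge n (t : 'I_n -> 'I_n) :
  (forall i j : 'I_n, (i < j)%N -> (t i < t j)%N) -> forall i : 'I_n, (i <= t i)%N.
Proof.
move=> ht.
suff H : forall m (i : 'I_n), (i : nat) = m -> (m <= t i)%N by move=> i; exact: (H i i erefl).
elim=> [|m IH] i hi; first by [].
have hm : (m < n)%N by have := ltn_ord i; lia.
have := IH (Ordinal hm) erefl.
have : (t (Ordinal hm) < t i)%N by apply: ht; rewrite /= hi.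
lia.
Qed.

Lemma shuffle_a0_1 a (s : 'S_(a+0)) : shuffle s -> s = 1%g.
Proof.
rewrite shuffle_a0 => /forallP h.
have inc : forall i j : 'I_(a+0), (i < j)%N -> (s i < s j)%N.
  move=> i j hij.
  have ha : (i < a)%N by have := ltn_ord i; lia.
  have hb : (j < a)%N by have := ltn_ord j; lia.
  have := forallP (h (Ordinal ha)) (Ordinal hb); rewrite /= hij /=.
  have -> : lshift 0 (Ordinal ha) = i by apply: val_inj.
  by have -> : lshift 0 (Ordinal hb) = j by apply: val_inj.
have incV : forall i j : 'I_(a+0), (i < j)%N -> ((s^-1)%g i < (s^-1)%g j)%N.
  move=> i j hij; rewrite ltnNge leq_eqVlt; apply/negP => /orP [/eqP e|].
    by move: hij; rewrite -(permKV s i) -(permKV s j) (val_inj e) ltnn.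
  by move=> /inc; rewrite !permKV => /(ltn_trans hij); rewrite ltnn.
apply/permP => i; rewrite perm1; apply: val_inj; apply/eqP; rewrite eqn_leq.
rewrite (incr_ge inc) /=.
by have := incr_ge incV (s i); rewrite permK andbT.
Qed.

Lemma dmul_unit (k : fieldType) (U : vectType k) a (f : dform U a) (u : {ffun 'I_(a+0) -> U}) :
  dmul f (fun _ => 1) u = f [ffun i => u (lshift 0 i)].
Proof.
rewrite /dmul (big_pred1 1%g).
  by rewrite mulr1; congr f; apply/ffunP => i; rewrite !ffunE perm1.
move=> s; rewrite /=; apply/idP/eqP => [/shuffle_a0_1 //| ->].
by rewrite shuffle_a0; apply/forallP => i; apply/forallP => j; apply/implyP; rewrite !perm1.
Qed.

Definition t2 (T : Type) (x y : T) : {ffun 'I_2 -> T} := [ffun i : 'I_2 => if val i == 0%N then x else y].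

Lemma perm3_facts (s : 'S_3) :
  [/\ (s o30 : nat) <> s o31, (s o30 : nat) <> s o32, (s o31 : nat) <> s o32
    & [/\ (s o30 < 3)%N, (s o31 < 3)%N & (s o32 < 3)%N]].
Proof.
split; try by move/val_inj/perm_inj.
by split; apply: ltn_ord.
Qed.

Lemma ord3_val (x : 'I_3) : [\/ x = o30 /\ (x : nat) = 0%N, x = o31 /\ (x : nat) = 1%N | x = o32 /\ (x : nat) = 2%N].
Proof. by case: (ord3P x) => ->; [constructor 1|constructor 2|constructor 3]. Qed.

Section Dmul.
Variables (k : fieldType) (U : vectType k).

Lemma dmul12 (f : dform U 1) (g : dform U 2) (u : {ffun 'I_3 -> U}) :
  dmul f g u = f [ffun => u o30] * g (t2 (u o31) (u o32))
             + f [ffun => u o31] * g (t2 (u o30) (u o32))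
             + f [ffun => u o32] * g (t2 (u o30) (u o31)).
Proof.
rewrite /dmul (reindex sigL) /=; last first.
  exists (fun s : 'S_3 => s o30) => [p _ | s]; first by rewrite permE.
  rewrite inE shuffle12E => hs; apply/permP => x; rewrite permE /mkfun.
  have [n01 n02 n12 [b0 b1 b2]] := perm3_facts s.
  case: (ord3P x) => -> /=; rewrite /lo3 /hi3 //;
  by case: (ord3_val (s o30)) => -[e ev]; rewrite e /=; apply/eqP; rewrite -val_eqE /=; apply/eqP; lia.
have hsh : forall p, @shuffle 1 2 (sigL p).
  by move=> p; rewrite shuffle12E !permE /mkfun /= /lo3 /hi3; case: (ord3P p) => ->.
under eq_bigl do rewrite hsh.
rewrite !big_ord_recl big_ord0 addr0 addrA.
congr (_ * _ + _ * _ + _ * _); congr (_ _); apply/ffunP => i; rewrite !ffunE permE /mkfun /=;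
  try (rewrite ord1 /=); try (case: (ord2P i) => -> /=); congr (u _); by apply: val_inj.
Qed.

Lemma dmul21 (f : dform U 2) (g : dform U 1) (u : {ffun 'I_3 -> U}) :
  dmul f g u = f (t2 (u o31) (u o32)) * g [ffun => u o30]
             + f (t2 (u o30) (u o32)) * g [ffun => u o31]
             + f (t2 (u o30) (u o31)) * g [ffun => u o32].
Proof.
rewrite /dmul (reindex sigR) /=; last first.
  exists (fun s : 'S_3 => s o32) => [p _ | s]; first by rewrite permE.
  rewrite inE shuffle21E => hs; apply/permP => x; rewrite permE /mkfun.
  have [n01 n02 n12 [b0 b1 b2]] := perm3_facts s.
  case: (ord3P x) => -> /=; rewrite /lo3 /hi3 //;
  by case: (ord3_val (s o32)) => -[e ev]; rewrite e /=; apply/eqP; rewrite -val_eqE /=; apply/eqP; lia.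
have hsh : forall p, @shuffle 2 1 (sigR p).
  by move=> p; rewrite shuffle21E !permE /mkfun /= /lo3 /hi3; case: (ord3P p) => ->.
under eq_bigl do rewrite hsh.
rewrite !big_ord_recl big_ord0 addr0 addrA.
congr (_ * _ + _ * _ + _ * _); congr (_ _); apply/ffunP => i; rewrite !ffunE permE /mkfun /=;
  try (rewrite ord1 /=); try (case: (ord2P i) => -> /=); congr (u _); by apply: val_inj.
Qed.

Lemma dmul11 (f g : dform U 1) (u : {ffun 'I_2 -> U}) :
  dmul f g u = f [ffun => u o20] * g [ffun => u o21] + f [ffun => u o21] * g [ffun => u o20].
Proof.
rewrite /dmul (reindex sig2) /=; last first.
  exists (fun s : 'S_2 => s o20) => [p _ | s _]; first by rewrite permE.
  apply/permP => x; rewrite permE /mkfun.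
  have n01 : (s o20 : nat) <> s o21 by move/val_inj/perm_inj.
  have b0 := ltn_ord (s o20); have b1 := ltn_ord (s o21).
  case: (ord2P x) => -> /=; rewrite /o2 //.
  case: (ord2P (s o20)) => e; rewrite e /=; apply/eqP; rewrite -val_eqE /=; apply/eqP;
  have := congr1 val e => /= ev; lia.
have hsh : forall p, @shuffle 1 1 (sig2 p) by move=> p; apply: shuffle11E.
under eq_bigl do rewrite hsh.
rewrite !big_ord_recl big_ord0 addr0.
congr (_ * _ + _ * _); congr (_ _); apply/ffunP => i; rewrite !ffunE permE /mkfun /=;
  rewrite ord1 /=; congr (u _); by apply: val_inj.
Qed.
End Dmul.

Section ML.
Variables (k : fieldType) (U : vectType k) (f : U -> k).
Hypothesis hf : forall a x y, f (a *: x + y) = a * f x + f y.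
Definition lf : U -> k^o := f.
Fact lf_lin : linear lf.
Proof. by move=> a x y; rewrite /lf hf. Qed.
HB.instance Definition _ := GRing.isLinear.Build k U k^o *:%R lf lf_lin.
Definition mklin : Udual U := linfun lf.
Lemma mklinE x : mklin x = f x.
Proof. by rewrite /mklin lfunE. Qed.
End ML.

Section Forms.
Variables (k : fieldType) (U : vectType k).

Lemma coord_lin d (e : d.-tuple U) i a x y : coord e i (a *: x + y) = a * coord e i x + coord e i y.
Proof. by rewrite linearP. Qed.
Definition Xc d (e : d.-tuple U) i : Udual U := mklin (coord e i).
Lemma XcE d (e : d.-tuple U) i x : Xc e i x = coord e i x.
Proof. exact: (mklinE (@coord_lin d e i)). Qed.

Definition t3 (x y z : U) : {ffun 'I_3 -> U} :=
  [ffun i : 'I_3 => if val i == 0%N then x else if val i == 1%N then y else z].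

Lemma ffun3E (u : {ffun 'I_3 -> U}) : u = t3 (u o30) (u o31) (u o32).
Proof.
by apply/ffunP => i; rewrite ffunE; case: (ord3P i) => ->.
Qed.

Variable phi : dform U 3.
Hypothesis hphi : inDU phi.
Definition F x y z := phi (t3 x y z).

Lemma F_lin1 a v w y z : F (a *: v + w) y z = a * F v y z + F w y z.
Proof.
have [hm _] := hphi.
have := hm (t3 v y z) o30 a v w; rewrite /F.
have E : forall t, [ffun j => if j == o30 then t else t3 v y z j] = t3 t y z.
  by move=> t; apply/ffunP => j; rewrite !ffunE; case: (ord3P j) => ->.
by rewrite !E.
Qed.

Lemma F_sym12 x y z : F x y z = F y x z.
Proof.
have [_ hs] := hphi.
rewrite /F -(hs (t3 x y z) (tperm o30 o31)); congr phi.
by apply/ffunP => j; rewrite !ffunE; case: (ord3P j) => ->; rewrite ?tpermL ?tpermR ?tpermD.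
Qed.

Lemma F_sym23 x y z : F x y z = F x z y.
Proof.
have [_ hs] := hphi.
rewrite /F -(hs (t3 x y z) (tperm o31 o32)); congr phi.
by apply/ffunP => j; rewrite !ffunE; case: (ord3P j) => ->; rewrite ?tpermL ?tpermR ?tpermD.
Qed.

Lemma F0 y z : F 0 y z = 0.
Proof.
have := F_lin1 1 0 0 y z; rewrite scale1r addr0 mul1r => h.
by have := congr1 (fun t => t - F 0 y z) h; rewrite addrK subrr => <-.
Qed.

Lemma F_sum1 n (c : 'I_n -> k) (e : 'I_n -> U) y z :
  F (\sum_(i < n) c i *: e i) y z = \sum_(i < n) c i * F (e i) y z.
Proof.
elim: n c e => [|n IH] c e; first by rewrite !big_ord0 F0.
by rewrite !big_ord_recr /= addrC F_lin1 IH addrC.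
Qed.

Lemma F_sym13 x y z : F x y z = F z y x.
Proof. by rewrite F_sym12 F_sym23 F_sym12. Qed.

Lemma F_sum2 n (c : 'I_n -> k) (e : 'I_n -> U) x z :
  F x (\sum_(i < n) c i *: e i) z = \sum_(i < n) c i * F x (e i) z.
Proof. rewrite F_sym12 F_sum1; apply: eq_bigr => i _; by rewrite F_sym12. Qed.

Lemma F_sum3 n (c : 'I_n -> k) (e : 'I_n -> U) x y :
  F x y (\sum_(i < n) c i *: e i) = \sum_(i < n) c i * F x y (e i).
Proof. rewrite F_sym13 F_sum1; apply: eq_bigr => i _; by rewrite F_sym13. Qed.

Lemma F_expand d (e : d.-tuple U) : basis_of fullv e -> forall x y z,
  F x y z = \sum_(i < d) \sum_(j < d) \sum_(l < d)
     F e`_i e`_j e`_l * (Xc e i x * Xc e j y * Xc e l z).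
Proof.
move=> hb x y z.
rewrite {1}(coord_basis hb (memvf x)) F_sum1; apply: eq_bigr => i _.
rewrite {1}(coord_basis hb (memvf y)) F_sum2 mulr_sumr; apply: eq_bigr => j _.
rewrite {1}(coord_basis hb (memvf z)) F_sum3 !mulr_sumr; apply: eq_bigr => l _.
rewrite !XcE; ring.
Qed.
End Forms.

Section Split.
Variable k : fieldType.

Lemma split2 m (c : 'I_m.+1 -> 'I_m.+1 -> k) (a b : 'I_m.+1 -> k) :
  (forall j l, c j l = c l j) ->
  \sum_j \sum_l c j l * (a j * b l) =
    c ord0 ord0 * (a ord0 * b ord0)
  + (a ord0 * \sum_l c ord0 (lift ord0 l) * b (lift ord0 l)
     + b ord0 * \sum_l c ord0 (lift ord0 l) * a (lift ord0 l))
  + \sum_j \sum_l c (lift ord0 j) (lift ord0 l) * (a (lift ord0 j) * b (lift ord0 l)).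
Proof.
move=> hc.
rewrite big_ord_recl big_ord_recl.
under [\sum_(i < m) \sum_l _]eq_bigr do rewrite big_ord_recl.
rewrite big_split /=.
have -> : \sum_(i < m) c ord0 (lift ord0 i) * (a ord0 * b (lift ord0 i))
   = a ord0 * \sum_l c ord0 (lift ord0 l) * b (lift ord0 l).
  by rewrite mulr_sumr; apply: eq_bigr => i _; ring.
have -> : \sum_(i < m) c (lift ord0 i) ord0 * (a (lift ord0 i) * b ord0)
   = b ord0 * \sum_l c ord0 (lift ord0 l) * a (lift ord0 l).
  by rewrite mulr_sumr; apply: eq_bigr => i _; rewrite hc; ring.
ring.
Qed.

Lemma split3 m (c : 'I_m.+1 -> 'I_m.+1 -> 'I_m.+1 -> k) (a b e : 'I_m.+1 -> k) :
  (forall i j l, c i j l = c j i l) -> (forall i j l, c i j l = c i l j) ->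
  let A x := \sum_l c ord0 ord0 (lift ord0 l) * x (lift ord0 l) in
  let Q (x y : 'I_m.+1 -> k) :=
    \sum_j \sum_l c ord0 (lift ord0 j) (lift ord0 l) * (x (lift ord0 j) * y (lift ord0 l)) in
  \sum_i \sum_j \sum_l c i j l * (a i * b j * e l) =
    c ord0 ord0 ord0 * (a ord0 * b ord0 * e ord0)
  + (a ord0 * b ord0 * A e + a ord0 * e ord0 * A b + b ord0 * e ord0 * A a)
  + (a ord0 * Q b e + b ord0 * Q a e + e ord0 * Q a b)
  + \sum_i \sum_j \sum_l c (lift ord0 i) (lift ord0 j) (lift ord0 l)
        * (a (lift ord0 i) * b (lift ord0 j) * e (lift ord0 l)).
Proof.
move=> h12 h23 A Q.
have h23' : forall i j l, c i j l = c i l j by [].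
have hsym0 : forall i, forall j l, c i j l = c i l j by move=> i j l; exact: h23.
have Ei : forall i, \sum_j \sum_l c i j l * (a i * b j * e l)
   = a i * (c i ord0 ord0 * (b ord0 * e ord0)
      + (b ord0 * \sum_l c i ord0 (lift ord0 l) * e (lift ord0 l)
         + e ord0 * \sum_l c i ord0 (lift ord0 l) * b (lift ord0 l))
      + \sum_j \sum_l c i (lift ord0 j) (lift ord0 l) * (b (lift ord0 j) * e (lift ord0 l))).
  move=> i; rewrite -(split2 (c := c i)) ?mulr_sumr; last by move=> j l; exact: h23.
  by apply: eq_bigr => j _; rewrite mulr_sumr; apply: eq_bigr => l _; ring.
under eq_bigr do rewrite Ei.
rewrite big_ord_recl.
rewrite /A /Q.
rewrite !mulrDr.
under [\sum_(i < m) a (lift ord0 i) * _]eq_bigr do rewrite !mulrDr.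
rewrite !big_split /=.
have -> : \sum_(i < m) a (lift ord0 i) * (c (lift ord0 i) ord0 ord0 * (b ord0 * e ord0))
    = b ord0 * e ord0 * \sum_l c ord0 ord0 (lift ord0 l) * a (lift ord0 l).
  rewrite mulr_sumr; apply: eq_bigr => i _; rewrite (h12 _ ord0) (h23 ord0); ring.
have -> : \sum_(i < m) a (lift ord0 i) * (b ord0 * \sum_l c (lift ord0 i) ord0 (lift ord0 l) * e (lift ord0 l))
    = b ord0 * \sum_j \sum_l c ord0 (lift ord0 j) (lift ord0 l) * (a (lift ord0 j) * e (lift ord0 l)).
  rewrite mulr_sumr; apply: eq_bigr => i _; rewrite !mulr_sumr; apply: eq_bigr => l _.
  rewrite (h12 _ ord0); ring.
have -> : \sum_(i < m) a (lift ord0 i) * (e ord0 * \sum_l c (lift ord0 i) ord0 (lift ord0 l) * b (lift ord0 l))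
    = e ord0 * \sum_j \sum_l c ord0 (lift ord0 j) (lift ord0 l) * (a (lift ord0 j) * b (lift ord0 l)).
  rewrite mulr_sumr; apply: eq_bigr => i _; rewrite !mulr_sumr; apply: eq_bigr => l _.
  rewrite (h12 _ ord0); ring.
have -> : \sum_(i < m) a (lift ord0 i) * \sum_j \sum_l c (lift ord0 i) (lift ord0 j) (lift ord0 l) * (b (lift ord0 j) * e (lift ord0 l))
   = \sum_i \sum_j \sum_l c (lift ord0 i) (lift ord0 j) (lift ord0 l)
        * (a (lift ord0 i) * b (lift ord0 j) * e (lift ord0 l)).
  apply: eq_bigr => i _; rewrite !mulr_sumr; apply: eq_bigr => j _; rewrite !mulr_sumr; apply: eq_bigr => l _.
  ring.
ring.
Qed.
End Split.

Section Sym.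
Variable k : fieldType.
Variable n : nat.
Definition S3 (H : 'I_n -> 'I_n -> 'I_n -> k) := \sum_i \sum_j \sum_l H i j l.

Lemma S3E H : S3 H = \sum_i \sum_j \sum_l H i j l.
Proof. by []. Qed.

Lemma eq_S3 H1 H2 : (forall i j l, H1 i j l = H2 i j l) -> S3 H1 = S3 H2.
Proof.
by move=> h; apply: eq_bigr => i _; apply: eq_bigr => j _; apply: eq_bigr => l _.
Qed.
Lemma S3_12 H : S3 H = S3 (fun i j l => H j i l).
Proof. by rewrite /S3 exchange_big. Qed.
Lemma S3_23 H : S3 H = S3 (fun i j l => H i l j).
Proof. by rewrite /S3; apply: eq_bigr => i _; rewrite exchange_big. Qed.
Lemma S3D H1 H2 : S3 (fun i j l => H1 i j l + H2 i j l) = S3 H1 + S3 H2.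
Proof.
rewrite /S3 -big_split; apply: eq_bigr => i _; rewrite -big_split;
apply: eq_bigr => j _; rewrite -big_split //.
Qed.

Definition ifc (b : bool) (x : k) := if b then x else 0.

Lemma Sym3 (G : 'I_n -> 'I_n -> 'I_n -> k) :
  (forall i j l : 'I_n, [|| i == j, j == l | i == l] -> G i j l = 0) ->
  S3 G = S3 (fun i j l => ifc ((i < j) && (j < l))%N
                 (G i j l + G j i l + G i l j + G j l i + G l i j + G l j i)).
Proof.
move=> hG.
transitivity (S3 (fun i j l =>
   ifc ((i < j) && (j < l))%N (G i j l) + ifc ((j < i) && (i < l))%N (G i j l)
 + ifc ((i < l) && (l < j))%N (G i j l) + ifc ((l < i) && (i < j))%N (G i j l)
 + ifc ((j < l) && (l < i))%N (G i j l) + ifc ((l < j) && (j < i))%N (G i j l))).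
  apply: eq_S3 => i j l; rewrite /ifc.
  have e1 : (i : nat) = j -> i == j by move=> h; apply/eqP/val_inj.
  have e2 : (j : nat) = l -> j == l by move=> h; apply/eqP/val_inj.
  have e3 : (i : nat) = l -> i == l by move=> h; apply/eqP/val_inj.
  case: (ltngtP i j) => h1; case: (ltngtP j l) => h2; case: (ltngtP i l) => h3;
  rewrite /= ?addr0 ?add0r //; try lia;
  rewrite hG ?(e1 h1) ?(e2 h2) ?(e3 h3) ?orbT //;
  (have -> : (l < i)%N = false by lia) || idtac;
  (have -> : (i < l)%N = false by lia) || idtac;
  (have -> : (j < l)%N = false by lia) || idtac;
  (have -> : (l < j)%N = false by lia) || idtac;
  (have -> : (j < i)%N = false by lia) || idtac;
  (have -> : (i < j)%N = false by lia) || idtac;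
  by rewrite /= ?addr0.
rewrite !S3D.
rewrite [RHS](@eq_S3 _ (fun i j l =>
    ifc ((i < j) && (j < l))%N (G i j l) + ifc ((i < j) && (j < l))%N (G j i l)
  + ifc ((i < j) && (j < l))%N (G i l j) + ifc ((i < j) && (j < l))%N (G j l i)
  + ifc ((i < j) && (j < l))%N (G l i j) + ifc ((i < j) && (j < l))%N (G l j i))); last first.
  by move=> i j l; rewrite /ifc; case: ifP; rewrite ?addr0.
rewrite !S3D.
congr (_ + _ + _ + _ + _ + _).
- by rewrite [LHS]S3_12.
- by rewrite [LHS]S3_23.
- by rewrite [LHS]S3_23 [LHS]S3_12.
- by rewrite [LHS]S3_12 [LHS]S3_23.
- by rewrite [LHS]S3_23 [LHS]S3_12 [LHS]S3_23.
Qed.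
End Sym.

Section DW.
Variables (k : fieldType) (U : vectType k) (W : {vspace Udual U}).

Lemma inDW_ext n (f g : dform U n) : inDW W f -> (forall u, g u = f u) -> inDW W g.
Proof. by move=> [m [c [gs [h1 h2]]]] e; exists m, c, gs; split=> // u; rewrite e h2. Qed.

Lemma inDW_0 n (f : dform U n) : (forall u, f u = 0) -> inDW W f.
Proof. by move=> h; exists 0%N, (fun _ => 0), (fun _ => f); split=> [[]|u] //; rewrite big_ord0. Qed.

Lemma inDW_gen n (g : dform U n) : dpgen W g -> inDW W g.
Proof. by move=> h; exists 1%N, (fun _ => 1), (fun _ => g); split=> // u; rewrite big_ord1 mul1r. Qed.

Lemma inDW_scale n a (f h : dform U n) : inDW W f -> (forall u, h u = a * f u) -> inDW W h.
Proof.
move=> [m [c [gs [h1 h2]]]] e; exists m, (fun i => a * c i), gs; split=> // u.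
by rewrite e h2 mulr_sumr; apply: eq_bigr => i _; rewrite mulrA.
Qed.

Lemma inDW_add n (f g h : dform U n) : inDW W f -> inDW W g ->
  (forall u, h u = f u + g u) -> inDW W h.
Proof.
move=> [m1 [c1 [g1 [h11 h12]]]] [m2 [c2 [g2 [h21 h22]]]] e.
exists (m1 + m2)%N, (fun i => match split i with inl a => c1 a | inr b => c2 b end),
  (fun i => match split i with inl a => g1 a | inr b => g2 b end); split.
  by move=> i; case: (split i).
move=> u; rewrite e h12 h22 big_split_ord /=.
congr (_ + _); apply: eq_bigr => i _.
  by rewrite (unsplitK (inl _ i)).
by rewrite (unsplitK (inr _ i)).
Qed.

Lemma inDW_mul n a (y : Udual U) (g : dform U n) : y \in W -> inDW W g ->
  inDW W (dmul (dpow y a.+1) g).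
Proof.
move=> hy [m [c [gs [h1 h2]]]].
exists m, c, (fun i => dmul (dpow y a.+1) (gs i)); split.
  by move=> i; apply: dpgenS.
move=> u; rewrite /dmul.
under eq_bigr do rewrite h2 mulr_sumr.
rewrite exchange_big /=; apply: eq_bigr => i _.
by rewrite mulr_sumr; apply: eq_bigr => s _; ring.
Qed.
End DW.

Section Vals.
Variables (k : fieldType) (U : vectType k).
Implicit Types y : Udual U.

Lemma dpow1E y (v : {ffun 'I_1 -> U}) : dpow y 1 v = (y (v ord0) : k).
Proof. by rewrite /dpow big_ord1. Qed.

Lemma gen2_val y (u : {ffun 'I_2 -> U}) :
  dmul (dpow y 2) (fun _ => 1) u = (y (u o20) : k) * (y (u o21) : k).
Proof.
rewrite dmul_unit /dpow !big_ord_recl big_ord0 !ffunE mulr1.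
by congr (_ * _); congr (y (u _)); apply: val_inj.
Qed.

Lemma gen3_val y (u : {ffun 'I_3 -> U}) :
  dmul (dpow y 3) (fun _ => 1) u = (y (u o30) : k) * (y (u o31) : k) * (y (u o32) : k).
Proof.
rewrite dmul_unit /dpow !big_ord_recl big_ord0 !ffunE mulr1 mulrA.
by congr (_ * _ * _); congr (y (u _)); apply: val_inj.
Qed.

Lemma gen1_val y (v : {ffun 'I_1 -> U}) :
  dmul (dpow y 1) (fun _ => 1) v = (y (v ord0) : k).
Proof.
rewrite dmul_unit /dpow big_ord1 !ffunE.
by congr (y (v _)); apply: val_inj.
Qed.

Lemma gen11_val y B (u : {ffun 'I_2 -> U}) :
  dmul (dpow y 1) (dmul (dpow B 1) (fun _ => 1)) u
  = (y (u o20) : k) * (B (u o21) : k) + (y (u o21) : k) * (B (u o20) : k).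
Proof. by rewrite dmul11 !dpow1E !gen1_val !ffunE. Qed.

Lemma gen21_val y A (u : {ffun 'I_3 -> U}) :
  dmul (dpow y 2) (dmul (dpow A 1) (fun _ => 1)) u
  = (y (u o31) : k) * (y (u o32) : k) * (A (u o30) : k)
  + (y (u o30) : k) * (y (u o32) : k) * (A (u o31) : k)
  + (y (u o30) : k) * (y (u o31) : k) * (A (u o32) : k).
Proof.
rewrite dmul21 !gen1_val !ffunE.
have E : forall x z : U, dpow y 2 (t2 x z) = (y x : k) * (y z : k).
  by move=> x z; rewrite /dpow !big_ord_recl big_ord0 !ffunE mulr1.
by rewrite !E.
Qed.

Lemma mul12_val y (g : dform U 2) (u : {ffun 'I_3 -> U}) :
  dmul (dpow y 1) g u = (y (u o30) : k) * g (t2 (u o31) (u o32))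
    + (y (u o31) : k) * g (t2 (u o30) (u o32)) + (y (u o32) : k) * g (t2 (u o30) (u o31)).
Proof. by rewrite dmul12 !dpow1E !ffunE. Qed.

Lemma mul21_val y z (u : {ffun 'I_3 -> U}) :
  dmul (dpow y 2) (dpow z 1) u
  = (y (u o31) : k) * (y (u o32) : k) * (z (u o30) : k)
  + (y (u o30) : k) * (y (u o32) : k) * (z (u o31) : k)
  + (y (u o30) : k) * (y (u o31) : k) * (z (u o32) : k).
Proof.
rewrite dmul21 !dpow1E !ffunE.
have E : forall x w : U, dpow y 2 (t2 x w) = (y x : k) * (y w : k).
  by move=> x w; rewrite /dpow !big_ord_recl big_ord0 !ffunE mulr1.
by rewrite !E.
Qed.

Lemma mul111_val y z w (u : {ffun 'I_3 -> U}) :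
  dmul (dmul (dpow y 1) (dpow z 1)) (dpow w 1) u
  = ((y (u o31) : k) * (z (u o32) : k) + (y (u o32) : k) * (z (u o31) : k)) * (w (u o30) : k)
  + ((y (u o30) : k) * (z (u o32) : k) + (y (u o32) : k) * (z (u o30) : k)) * (w (u o31) : k)
  + ((y (u o30) : k) * (z (u o31) : k) + (y (u o31) : k) * (z (u o30) : k)) * (w (u o32) : k).
Proof. by rewrite dmul21 !dmul11 !dpow1E !ffunE. Qed.
End Vals.

Section FormsDW.
Variables (k : fieldType) (U : vectType k) (W : {vspace Udual U}).

Definition form2 m (Y : 'I_m -> Udual U) (c : 'I_m -> 'I_m -> k) : dform U 2 :=
  fun u => \sum_j \sum_l c j l * ((Y j (u o20) : k) * (Y l (u o21) : k)).
Definition form3 m (Y : 'I_m -> Udual U) (c : 'I_m -> 'I_m -> 'I_m -> k) : dform U 3 :=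
  fun u => \sum_i \sum_j \sum_l c i j l *
     ((Y i (u o30) : k) * (Y j (u o31) : k) * (Y l (u o32) : k)).

Lemma lincombE m (c : 'I_m -> k) (Y : 'I_m -> Udual U) x :
  ((\sum_l c l *: Y l) x : k) = \sum_l c l * (Y l x : k).
Proof. by rewrite sum_lfunE; apply: eq_bigr => l _; rewrite scale_lfunE. Qed.

Lemma lincomb_in m (c : 'I_m -> k) (Y : 'I_m -> Udual U) :
  (forall j, Y j \in W) -> \sum_l c l *: Y l \in W.
Proof. by move=> hY; apply: memv_suml => l _; apply: memvZ. Qed.

Lemma inDW_form2 m (Y : 'I_m -> Udual U) c :
  (forall j, Y j \in W) -> (forall j l, c j l = c l j) -> inDW W (form2 Y c).
Proof.
elim: m Y c => [|m IH] Y c hY hc.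
  by apply: inDW_0 => u; rewrite /form2 big_ord0.
set B := \sum_l c ord0 (lift ord0 l) *: Y (lift ord0 l).
have hB : B \in W by apply: lincomb_in.
apply: (@inDW_add _ _ W 2
  (fun u : {ffun 'I_2 -> U} => c ord0 ord0 * dmul (dpow (Y ord0) 2) (fun _ => 1) u
     + dmul (dpow (Y ord0) 1) (dmul (dpow B 1) (fun _ => 1)) u)
  (form2 (fun j => Y (lift ord0 j)) (fun j l => c (lift ord0 j) (lift ord0 l)))).
- apply: inDW_add.
  + exact: (inDW_scale (inDW_gen (dpgenS 1 (hY ord0) (dpgen0 W)))).
  + exact: (inDW_gen (dpgenS 0 (hY ord0) (dpgenS 0 hB (dpgen0 W)))).
  + by [].
- by apply: IH => // j; apply: hY.
- move=> u; rewrite /form2 split2 // gen2_val gen11_val !lincombE; ring.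
Qed.

Lemma inDW_form3 m (Y : 'I_m -> Udual U) c :
  (forall j, Y j \in W) -> (forall i j l, c i j l = c j i l) ->
  (forall i j l, c i j l = c i l j) -> inDW W (form3 Y c).
Proof.
elim: m Y c => [|m IH] Y c hY h12 h23.
  by apply: inDW_0 => u; rewrite /form3 big_ord0.
set A := \sum_l c ord0 ord0 (lift ord0 l) *: Y (lift ord0 l).
have hA : A \in W by apply: lincomb_in.
set Q := form2 (fun j => Y (lift ord0 j)) (fun j l => c ord0 (lift ord0 j) (lift ord0 l)).
have hQ : inDW W Q.
  by apply: inDW_form2 => [j|j l]; [apply: hY | apply: h23].
apply: (@inDW_add _ _ W 3
  (fun u : {ffun 'I_3 -> U} => c ord0 ord0 ord0 * dmul (dpow (Y ord0) 3) (fun _ => 1) u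
     + dmul (dpow (Y ord0) 2) (dmul (dpow A 1) (fun _ => 1)) u
     + dmul (dpow (Y ord0) 1) Q u)
  (form3 (fun j => Y (lift ord0 j)) (fun i j l => c (lift ord0 i) (lift ord0 j) (lift ord0 l)))).
- apply: inDW_add; last by [].
  apply: inDW_add; last by [].
  + exact: (inDW_scale (inDW_gen (dpgenS 2 (hY ord0) (dpgen0 W)))).
  + exact: (inDW_gen (dpgenS 1 (hY ord0) (dpgenS 0 hA (dpgen0 W)))).
  + exact: (inDW_mul 0 (hY ord0) hQ).
- by apply: IH => // j; apply: hY.
- move=> u; rewrite /form3 split3 // gen3_val gen21_val mul12_val /Q /form2 !ffunE /= !lincombE.
  ring.
Qed.
End FormsDW.

Section Bas.
Variables (k : fieldType) (U : vectType k).

Lemma basis_size (s : seq U) : basis_of fullv s -> size s = \dim (fullv : {vspace U}).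
Proof.
move=> hb; have h := basis_free hb.
by rewrite /free (span_basis hb) in h; rewrite (eqP h).
Qed.

Lemma dim_ker_bound (l : Udual U) : (\dim (fullv : {vspace U}) <= \dim (lker l) + 1)%N.
Proof.
have := limg_ker_dim l fullv; rewrite capfv => <-.
rewrite leq_add2l.
have := dimvS (subvf (l @: fullv)%VS).
by rewrite dimvf.
Qed.

Lemma basisA (l : Udual U) v : l v != 0 -> basis_of fullv (v :: vbasis (lker l)).
Proof.
move=> hv; rewrite basisEfree subvf /=.
apply/andP; split.
  rewrite free_cons (span_basis (vbasisP _)) memv_ker hv /=.
  exact: basis_free (vbasisP _).
have := dim_ker_bound l; rewrite /= size_tuple; lia.
Qed.

Lemma basisB (l : Udual U) v w : l v = 0 -> l w != 0 -> v != 0 ->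
  basis_of fullv (v :: w :: vbasis (lker l :\: <[v]>)).
Proof.
move=> lv lw vn0; set H := (lker l :\: <[v]>)%VS.
have HK : (H <= lker l)%VS by apply: diffvSl.
rewrite basisEfree subvf /=.
apply/andP; split.
  rewrite free_cons free_cons (span_basis (vbasisP _)) span_cons (span_basis (vbasisP _)).
  apply/and3P; split; last exact: basis_free (vbasisP _).
    apply/memv_addP => -[x hx [y hy e]].
    case/vlineP: hx => c ec; subst x.
    have yK : y \in lker l := subvP HK y hy.
    move: (yK); rewrite memv_ker => /eqP ly0.
    have : l v = c * l w by rewrite e linearD linearZ /= ly0 addr0.
    rewrite lv => /esym /eqP; rewrite mulf_eq0 (negbTE lw) orbF => /eqP c0.
    move: e; rewrite c0 scale0r add0r => ey; subst y.
    have : v \in (H :&: <[v]>)%VS by rewrite memv_cap hy memv_line.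
    by rewrite capv_diff memv0 (negbTE vn0).
  apply: contra lw => /(subvP HK); rewrite memv_ker => /eqP ->; by [].
rewrite /= size_tuple.
have h1 := dim_ker_bound l.
have h2 : (\dim (lker l) <= \dim H + 1)%N.
  rewrite -{1}(addv_diff_cap (lker l) <[v]>).
  apply: leq_trans (dimv_add_leqif _ _) _.
  rewrite leq_add2l.
  apply: leq_trans (dimvS (capvSr _ _)) _.
  by rewrite dim_vline; case: (v != 0).
lia.
Qed.
End Bas.

Section Dual.
Variables (k : fieldType) (U : vectType k) (d : nat) (e : d.-tuple U).
Hypothesis hb : basis_of fullv e.

Definition Xt : d.-tuple (Udual U) := [tuple Xc e i | i < d].

Lemma Xt_nth (i : 'I_d) : Xt`_i = Xc e i.
Proof. exact: nth_mktuple. Qed.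

Lemma Xc_e (i j : 'I_d) : (Xc e i e`_j : k) = (j == i)%:R.
Proof. by rewrite XcE coord_free // (basis_free hb). Qed.

Lemma Xt_basis : \dim (fullv : {vspace U}) = d -> basis_of fullv Xt.
Proof.
move=> hd; rewrite basisEfree subvf size_tuple.
apply/andP; split; last first.
  have -> : \dim (fullv : {vspace Udual U}) = \dim (fullv : {vspace U}).
    by rewrite !dimvf /Udual /=; exact: muln1.
  by rewrite hd leqnn.
apply/freeP => c hc i.
have := congr1 (fun f : Udual U => (f e`_i : k)) hc.
rewrite /= sum_lfunE zero_lfunE (bigD1 i) //= big1 ?addr0.
  by rewrite scale_lfunE Xt_nth Xc_e eqxx => <-; exact: (esym (mulr1 _)).
by move=> j hj; rewrite scale_lfunE Xt_nth Xc_e eq_sym (negbTE hj); exact: (mulr0 _).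
Qed.
End Dual.

Lemma Y_in (k : fieldType) (U : vectType k) d (e : d.+1.-tuple U) (j : 'I_d) :
  Xc e (lift ord0 j) \in << drop 1 (Xt e) >>%VS.
Proof.
apply: memv_span.
have -> : Xc e (lift ord0 j) = nth 0 (drop 1 (Xt e)) j.
  by rewrite nth_drop -(Xt_nth e (lift ord0 j)).
by apply: mem_nth; rewrite size_drop size_tuple subn1.
Qed.

Definition Concl (k : fieldType) (U : vectType k) (d : nat) (phi3 : dform U 3) : Prop :=
  exists (alpha : k) (X : d.-tuple (Udual U)),
    alpha \is a GRing.unit /\ basis_of fullv X /\
    let W := (<< drop 1 X >>)%VS in
    [\/ exists (phi20 : dform U 2) (phi30 : dform U 3),
          [/\ inDW W phi20, inDW W phi30 &
              forall u, alpha * phi3 u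
                = dpow X`_0 3 u + dmul (dpow X`_0 1) phi20 u + phi30 u],
        exists (phi20 : dform U 2) (phi30 : dform U 3),
          [/\ inDW W phi20, inDW W phi30 &
              forall u, alpha * phi3 u
                = dmul (dpow X`_0 2) (dpow X`_1 1) u
                  + dmul (dpow X`_0 1) phi20 u + phi30 u]
      | 2%N \in [pchar k] /\
        exists c : 'I_d -> 'I_d -> 'I_d -> k,
          forall u, phi3 u =
            \sum_(i < d) \sum_(j < d | (i < j)%N) \sum_(l < d | (j < l)%N)
               c i j l * dmul (dmul (dpow X`_i 1) (dpow X`_j 1)) (dpow X`_l 1) u].

Section Main.
Variables (k : fieldType) (U : vectType k) (phi : dform U 3).
Hypothesis hphi : inDU phi.
Local Notation F := (F phi).

Lemma dpow3E (y : Udual U) (u : {ffun 'I_3 -> U}) :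
  dpow y 3 u = (y (u o30) : k) * (y (u o31) : k) * (y (u o32) : k).
Proof.
rewrite /dpow !big_ord_recl big_ord0 mulr1 mulrA.
by congr (_ * _ * _); congr (y (u _)); apply: val_inj.
Qed.

Lemma phiF u : phi u = F (u o30) (u o31) (u o32).
Proof. by rewrite {1}(ffun3E u). Qed.

Lemma F_lin3 v w a x y : F v w (a *: x + y) = a * F v w x + F v w y.
Proof. by rewrite F_sym13 // F_lin1 // [F x _ _]F_sym13 // [F y _ _]F_sym13. Qed.

Lemma caseA d : \dim (fullv : {vspace U}) = d ->
  forall v, F v v v != 0 -> Concl d phi.
Proof.
move=> hd v hv.
pose ll := mklin (fun x => F v v x).
have lE : forall x, (ll x : k) = F v v x by move=> x; rewrite mklinE // => a x1 y1; apply: F_lin3.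
have lv : ll v != 0 by rewrite lE.
have hb := basisA lv.
set s := v :: vbasis (lker ll) in hb.
have hs : size s == d by rewrite (basis_size hb) hd.
move: hs; case: d hd => [|d] hd hs //.
pose e : d.+1.-tuple U := Tuple hs.
have hbe : basis_of fullv e by [].
have e0 : e`_0 = v by [].
have eK : forall j : 'I_d, F v v e`_(lift ord0 j) = 0.
  move=> j; have : e`_(lift ord0 j) \in lker ll.
    apply: vbasis_mem.
    have -> : e`_(lift ord0 j) = (vbasis (lker ll))`_j by [].
    by apply: mem_nth; move: (eqP hs) => /= [->].
  by rewrite memv_ker => /eqP; rewrite lE.
pose c (i j l : 'I_d.+1) := F e`_i e`_j e`_l.
have h12 : forall i j l, c i j l = c j i l by move=> *; rewrite /c F_sym12.
have h23 : forall i j l, c i j l = c i l j by move=> *; rewrite /c F_sym23.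
have c0 : c ord0 ord0 ord0 != 0 by rewrite /c e0.
exists (c ord0 ord0 ord0)^-1, (Xt e); split; first by rewrite unitfE invr_eq0.
split; first exact: Xt_basis.
constructor 1.
pose Y j := Xc e (lift ord0 j).
have hY : forall j, Y j \in << drop 1 (Xt e) >>%VS by move=> j; apply: Y_in.
exists (fun u => (c ord0 ord0 ord0)^-1 * form2 Y (fun j l => c ord0 (lift ord0 j) (lift ord0 l)) u).
exists (fun u => (c ord0 ord0 ord0)^-1 * form3 Y (fun i j l => c (lift ord0 i) (lift ord0 j) (lift ord0 l)) u).
split.
- apply: (inDW_scale (inDW_form2 _ _)) => // j l; exact: h23.
- apply: (inDW_scale (inDW_form3 _ _ _)) => // i j l; [exact: h12|exact: h23].
move=> u.
rewrite phiF (F_expand hphi hbe).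
rewrite (split3 (c := c) (fun i => (Xc e i (u o30) : k)) (fun i => (Xc e i (u o31) : k))
   (fun i => (Xc e i (u o32) : k)) h12 h23) /=.
rewrite (Xt_nth e ord0) dpow3E mul12_val /form2 /form3 !ffunE /=.
have A0 : forall y : U, \sum_l c ord0 ord0 (lift ord0 l) * (Xc e (lift ord0 l) y : k) = 0.
  by move=> y; apply: big1 => j _; rewrite /c e0 eK mul0r.
rewrite !A0 /Y.
field.
exact: c0.
Qed.

Lemma caseB d : \dim (fullv : {vspace U}) = d -> (forall x, F x x x = 0) ->
  forall v w, F v v w != 0 -> Concl d phi.
Proof.
move=> hd hA v w hvw.
pose ll := mklin (fun x => F v v x).
have lE : forall x, (ll x : k) = F v v x by move=> x; rewrite mklinE // => a x1 y1; apply: F_lin3.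
have lv : ll v = 0 by rewrite lE hA.
have lw : ll w != 0 by rewrite lE.
have vn0 : v != 0.
  by apply: contra hvw => /eqP ->; rewrite F0.
have hb := basisB lv lw vn0.
set s := v :: w :: vbasis (lker ll :\: <[v]>) in hb.
have hs : size s == d by rewrite (basis_size hb) hd.
move: hs; case: d hd => [|[|d]] hd hs //.
pose e : d.+2.-tuple U := Tuple hs.
have hbe : basis_of fullv e by [].
have e0 : e`_0 = v by [].
have e1 : e`_(lift ord0 (@ord0 d)) = w by [].
have eK : forall j : 'I_d, F v v e`_(lift ord0 (lift ord0 j)) = 0.
  move=> j; have : e`_(lift ord0 (lift ord0 j)) \in lker ll.
    apply: (subvP (diffvSl _ _)); apply: vbasis_mem.
    have -> : e`_(lift ord0 (lift ord0 j)) = (vbasis (lker ll :\: <[v]>))`_j by [].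
    by apply: mem_nth; move: (eqP hs) => /= [->].
  by rewrite memv_ker => /eqP; rewrite lE.
pose c (i j l : 'I_d.+2) := F e`_i e`_j e`_l.
have h12 : forall i j l, c i j l = c j i l by move=> *; rewrite /c F_sym12.
have h23 : forall i j l, c i j l = c i l j by move=> *; rewrite /c F_sym23.
have c1 : c ord0 ord0 (lift ord0 ord0) != 0 by rewrite /c e0 e1.
have c0 : c ord0 ord0 ord0 = 0 by rewrite /c e0 hA.
exists (c ord0 ord0 (lift ord0 ord0))^-1, (Xt e); split; first by rewrite unitfE invr_eq0.
split; first exact: Xt_basis.
constructor 2.
pose Y j := Xc e (lift ord0 j).
have hY : forall j, Y j \in << drop 1 (Xt e) >>%VS by move=> j; apply: Y_in.
exists (fun u => (c ord0 ord0 (lift ord0 ord0))^-1 * form2 Y (fun j l => c ord0 (lift ord0 j) (lift ord0 l)) u).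
exists (fun u => (c ord0 ord0 (lift ord0 ord0))^-1 * form3 Y (fun i j l => c (lift ord0 i) (lift ord0 j) (lift ord0 l)) u).
split.
- apply: (inDW_scale (inDW_form2 _ _)) => // j l; exact: h23.
- apply: (inDW_scale (inDW_form3 _ _ _)) => // i j l; [exact: h12|exact: h23].
move=> u.
rewrite phiF (F_expand hphi hbe).
rewrite (split3 (c := c) (fun i => (Xc e i (u o30) : k)) (fun i => (Xc e i (u o31) : k))
   (fun i => (Xc e i (u o32) : k)) h12 h23) /=.
rewrite (Xt_nth e ord0) (Xt_nth e (lift ord0 ord0)) mul21_val mul12_val /form2 /form3 !ffunE /=.
have A0 : forall y : U, \sum_l c ord0 ord0 (lift ord0 l) * (Xc e (lift ord0 l) y : k)
   = c ord0 ord0 (lift ord0 ord0) * (Xc e (lift ord0 ord0) y : k).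
  move=> y; rewrite big_ord_recl big1 ?addr0 //.
  by move=> j _; rewrite /c e0 eK mul0r.
rewrite !A0 c0 /Y.
field.
exact: c1.
Qed.

Lemma caseC d : \dim (fullv : {vspace U}) = d -> (forall x y, F x x y = 0) ->
  (exists u, phi u != 0) -> Concl d phi.
Proof.
move=> hd hB [u0 hu0].
have hs : size (vbasis (fullv : {vspace U})) == d by rewrite size_tuple hd.
pose e : d.-tuple U := Tuple hs.
have hbe : basis_of fullv e by exact: vbasisP.
pose c (i j l : 'I_d) := F e`_i e`_j e`_l.
have h12 : forall i j l, c i j l = c j i l by move=> *; rewrite /c F_sym12.
have h23 : forall i j l, c i j l = c i l j by move=> *; rewrite /c F_sym23.
exists 1, (Xt e); split; first exact: unitr1.
split; first exact: Xt_basis.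
constructor 3; split.
  have F2 : forall x y z, F x y z *+ 2 = 0.
    move=> x y z.
    have add1 : forall a b w t, F (a + b) w t = F a w t + F b w t.
      by move=> a b w t; rewrite -[a]scale1r F_lin1 // mul1r scale1r.
    have add2 : forall w a b t, F w (a + b) t = F w a t + F w b t.
      by move=> w a b t; rewrite F_sym12 // add1 F_sym12 // [F b _ _]F_sym12.
    have := hB (x + y) z.
    rewrite add1 !add2 !hB add0r addr0 [F y x z]F_sym12 // => h.
  rewrite phiF in hu0.
  have := F2 (u0 o30) (u0 o31) (u0 o32).
  rewrite -mulr_natl => /eqP; rewrite mulf_eq0 (negbTE hu0) orbF => h2.
  by rewrite inE /= h2.
exists c => u.
rewrite phiF (F_expand hphi hbe).
have hz : forall i j l : 'I_d, [|| i == j, j == l | i == l] -> c i j l = 0.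
  move=> i j l /or3P [] /eqP <-; rewrite /c.
  - exact: hB.
  - by rewrite F_sym13 //; apply: hB.
  - by rewrite F_sym23 //; apply: hB.
have := @Sym3 _ _ (fun i j l => c i j l * ((Xc e i (u o30) : k) * (Xc e j (u o31) : k) * (Xc e l (u o32) : k))).
rewrite S3E => ->; last by move=> i j l h; rewrite hz ?mul0r.
apply: eq_bigr => i _; rewrite [RHS]big_mkcond; apply: eq_bigr => j _ /=.
case: ifP => hij; last first.
  by apply: big1 => l _; rewrite /ifc ?hij.
rewrite [RHS]big_mkcond; apply: eq_bigr => l _ /=; rewrite /ifc ?hij /=.
case: ifP => hjl //.
rewrite !Xt_nth mul111_val.
have s1 : c j i l = c i j l by rewrite h12.
have s2 : c i l j = c i j l by rewrite h23.
have s3 : c j l i = c i j l by rewrite h23 h12.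
have s4 : c l i j = c i j l by rewrite h12 h23.
have s5 : c l j i = c i j l by rewrite h12 h23 h12.
rewrite s1 s2 s3 s4 s5; ring.
Qed.
End Main.

Unset Implicit Arguments. Set Strict Implicit.
Theorem lemma3p1 (k : fieldType) (U : vectType k) (d : nat)
  (hd : \dim (fullv : {vspace U}) = d)
  (phi3 : dform U 3) (hphi : inDU phi3) (hnz : exists u, phi3 u != 0) :
  exists (alpha : k) (X : d.-tuple (Udual U)),
    alpha \is a GRing.unit /\ basis_of fullv X /\
    let W := (<< drop 1 X >>)%VS in
    [\/ exists (phi20 : dform U 2) (phi30 : dform U 3),
          [/\ inDW W phi20, inDW W phi30 &
              forall u, alpha * phi3 u
                = dpow X`_0 3 u + dmul (dpow X`_0 1) phi20 u + phi30 u],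
        exists (phi20 : dform U 2) (phi30 : dform U 3),
          [/\ inDW W phi20, inDW W phi30 &
              forall u, alpha * phi3 u
                = dmul (dpow X`_0 2) (dpow X`_1 1) u
                  + dmul (dpow X`_0 1) phi20 u + phi30 u]
      | 2%N \in [pchar k] /\
        exists c : 'I_d -> 'I_d -> 'I_d -> k,
          forall u, phi3 u =
            \sum_(i < d) \sum_(j < d | (i < j)%N) \sum_(l < d | (j < l)%N)
               c i j l * dmul (dmul (dpow X`_i 1) (dpow X`_j 1)) (dpow X`_l 1) u].
Proof.
change (Concl d phi3).
case: (classic (exists v, F phi3 v v v != 0)) => [[v hv]|hA].
  exact: (caseA hphi hd hv).
have hA' : forall x, F phi3 x x x = 0.
  move=> x; case: (eqVneq (F phi3 x x x) 0) => // h; exfalso; apply: hA; by exists x.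
case: (classic (exists v w, F phi3 v v w != 0)) => [[v [w hvw]]|hB].
  exact: (caseB hphi hd hA' hvw).
apply: (caseC hphi hd) => // x y.
case: (eqVneq (F phi3 x x y) 0) => // h; exfalso; apply: hB; by exists x, y.
Qed.
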